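(* Let $p,q,s$ be complex numbers with $p\neq0$, $q\neq 0$, $s^2\neq -1$. Let $\tilde A$ be the unital complex algebra generated by $\xi,\eta,\zeta,U,V,Z$ subject to the relations $$\zeta\xi=q^2\xi\zeta,\quad \eta\zeta=q^2\zeta\eta,\quad \xi U=pU\xi,\quad V\xi=p\xi V,\quad \eta V=pV\eta,\quad U\eta=p\eta U,$$ $$UV=VU,\quad U\zeta=\zeta U,\quad V\zeta=\zeta V,$$ $$\xi\eta=(\zeta-1)(\zeta+s^2)+UV,\qquad \eta\xi=(q^2\zeta-1)(q^2\zeta+s^2)+UV,$$ together with the requirements that $Z$ is central and $Z^2=UV$. Let $$\tilde e=\frac{1}{2(1+s^2)}\begin{pmatrix}1+s^2+2Z&0&1-s^2-2\zeta&2\xi\\ 0&1+s^2+2Z&-2\eta&s^2-1+2q^2\zeta\\ 1-s^2-2\zeta&2\xi&1+s^2-2Z&0\\ -2\eta&s^2-1+2q^2\zeta&0&1+s^2-2Z\end{pmatrix}\in\mathrm{Mat}_4(\tilde A).$$ Then $\tilde e^2=\tilde e$. Moreover, if $q^2,s^2$ are real, $|p|=1$, and $\tilde A$ carries the involution with $\zeta^*=\zeta$, $\xi^*=-\eta$, $U^*=V$, $Z^*=Z$, then $\tilde e^*=\tilde e$ (entrywise involution combined with transposition). *)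

(* Defs.v *)
From HB Require Import structures.
From mathcomp Require Import all_boot all_order all_algebra.
From mathcomp Require Import complex.
From mathcomp Require Import Rstruct.
Set Implicit Arguments. Unset Strict Implicit. Unset Printing Implicit Defensive.
Import Order.TTheory GRing.Theory Num.Theory.
Local Open Scope ring_scope.

Notation CC := (complex Rdefinitions.R).

Definition tildeA_relations (A : algType CC) (p q s : CC)
    (xi eta zeta U V Z : A) : Prop :=
  [/\ [/\ zeta * xi = (q ^+ 2)%:A * xi * zeta,
         eta * zeta = (q ^+ 2)%:A * zeta * eta &
         xi * U = p%:A * U * xi],
      [/\ V * xi = p%:A * xi * V,
         eta * V = p%:A * V * eta &
         U * eta = p%:A * eta * U],
      [/\ U * V = V * U,
         U * zeta = zeta * U &
         V * zeta = zeta * V],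
      [/\ xi * eta = (zeta - 1) * (zeta + (s ^+ 2)%:A) + U * V &
         eta * xi = ((q ^+ 2)%:A * zeta - 1) * ((q ^+ 2)%:A * zeta + (s ^+ 2)%:A)
                    + U * V] &
      [/\ forall a : A, Z * a = a * Z & Z ^+ 2 = U * V]].

Definition e_tilde (A : algType CC) (q s : CC) (xi eta zeta Z : A)
    : 'M[A]_4 :=
  let c : A := ((2 * (1 + s ^+ 2))^-1)%:A in
  let a := (1 + s ^+ 2)%:A + Z *+ 2 in
  let b := (1 + s ^+ 2)%:A - Z *+ 2 in
  let d := (1 - s ^+ 2)%:A - zeta *+ 2 in
  let f := (s ^+ 2 - 1)%:A + ((q ^+ 2)%:A * zeta) *+ 2 in
  let rows : seq (seq A) :=
    [:: [:: a;        0;      d;      xi *+ 2];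
        [:: 0;        a;      - (eta *+ 2); f];
        [:: d;        xi *+ 2; b;      0];
        [:: - (eta *+ 2); f;   0;      b]] in
  \matrix_(i < 4, j < 4) (c * nth 0 (nth [::] rows i) j).

Definition is_involution (A : algType CC) (star : A -> A) : Prop :=
  [/\ forall a b, star (a + b) = star a + star b,
      forall (c : CC) a, star (c *: a) = (c^*)%C *: star a,
      forall a b, star (a * b) = star b * star a &
      forall a, star (star a) = a].

Definition mx_star (A : algType CC) (star : A -> A) (m : 'M[A]_4) : 'M[A]_4 :=
  \matrix_(i < 4, j < 4) star (m j i).

(* Main.v *)
Require Import Defs.
From HB Require Import structures.
From mathcomp Require Import all_boot all_order all_algebra.
From mathcomp Require Import complex Rstruct ring.
Import Order.TTheory GRing.Theory Num.Theory.
Local Open Scope ring_scope.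

Definition Mf (R : nzRingType) (a b d x y f : R) (i j : 'I_4) : R :=
  nth 0 (nth [::] [:: [:: a; 0; d; x]; [:: 0; a; y; f]; [:: d; x; b; 0]; [:: y; f; 0; b]] i) j.

Arguments Mf {R}.
Lemma block (R : nzRingType) (a b d x y f t : R) :
  (forall w, a * w = w * a) -> (forall w, b * w = w * b) -> (forall w, t * w = w * t) ->
  a + b = t -> d * d + x * y = a * b -> d * x + x * f = 0 -> y * d + f * y = 0 ->
  y * x + f * f = a * b ->
  forall i j, \sum_(k < 4) Mf a b d x y f i k * Mf a b d x y f k j = t * Mf a b d x y f i j.
Proof.
move=> Ha Hb Ht Hab H1 H2 H3 H4 i j.
rewrite !big_ord_recr big_ord0 /= add0r.
have E1 : forall u, a * u + u * b = t * u.
  by move=> u; rewrite (Ha u) -mulrDr Hab (Ht u).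
have E2 : forall u, u * a + b * u = t * u by move=> u; rewrite (Hb u) -mulrDr Hab (Ht u).
case: i => [[|[|[|[|i]]]] Hi] //=; case: j => [[|[|[|[|j]]]] Hj] //=;
  rewrite /Mf /= ?mul0r ?mulr0 ?addr0 ?add0r //.
- by rewrite -addrA H1 -mulrDr Hab.
- by rewrite -addrA H4 -mulrDr Hab.
- by rewrite H1 -mulrDl Hab Ht.
- by rewrite H4 -mulrDl Hab Ht.
Qed.

Lemma polyid (r : CC) : ((1-r)%:P - 'X*+2)*((1-r)%:P - 'X*+2) - (('X-1)*('X+r%:P))*+4 = ((1 + r)^+2)%:P :> {poly CC}.
Proof. rewrite !(rmorphB, rmorphD, rmorph1). ring. Qed.

Lemma polyid2 (r w : CC) : ((r-1)%:P + (w%:P * 'X)*+2)*((r-1)%:P + (w%:P * 'X)*+2) - ((w%:P * 'X - 1)*(w%:P * 'X+r%:P))*+4 = ((1 + r)^+2)%:P :> {poly CC}.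
Proof. rewrite !(rmorphB, rmorphD, rmorph1). ring. Qed.

Lemma part1 (p q s : CC) (hq : q != 0) (hs : s ^+ 2 != - 1)
    (A : algType CC) (xi eta zeta U V Z : A)
    (hrel : tildeA_relations p q s xi eta zeta U V Z) :
  e_tilde q s xi eta zeta Z * e_tilde q s xi eta zeta Z
    = e_tilde q s xi eta zeta Z.
Proof.
case: hrel => [[r1 r2 r3] [r4 r5 r6] [r7 r8 r9] [r10 r11] [zc z2]].
set r := s ^+ 2; set w := q ^+ 2; set k := 1 + r.
set c : A := ((2 * k)^-1)%:A.
set a : A := k%:A + Z *+ 2.
set b : A := k%:A - Z *+ 2.
set d : A := (1 - r)%:A - zeta *+ 2.
set f : A := (r - 1)%:A + (w%:A * zeta) *+ 2.
set x : A := xi *+ 2.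
set y : A := - (eta *+ 2).
have Ee : forall i j, e_tilde q s xi eta zeta Z i j = c * Mf a b d x y f i j.
  by move=> i j; rewrite mxE.
apply/matrixP => i j.
rewrite [RHS]Ee mxE.
under eq_bigr do rewrite !Ee.
have cC : forall u, c * u = u * c by move=> u; rewrite mulr_algl mulr_algr.
have Hk : 2 * k != 0.
  by rewrite mulf_neq0 // ?pnatr_eq0 // /k addrC addr_eq0.
set t : A := (2 * k)%:A.
have ct : c * t = 1 by rewrite mulr_algl /t scalerA mulVf // scale1r.
have tC : forall u, t * u = u * t by move=> u; rewrite mulr_algl mulr_algr.
rewrite (eq_bigr (fun k0 => c * (c * (Mf a b d x y f i k0 * Mf a b d x y f k0 j)))); last first.
  by move=> k0 _; rewrite !mulrA -(mulrA c) -cC !mulrA.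
have ab : a * b = (k ^+ 2)%:A - (U * V) *+ 4.
  rewrite /a /b mulrDl !mulrBr [k%:A * (Z *+ 2)]mulr_algl [(Z *+ 2) * k%:A]mulr_algr addrA subrK.
  by rewrite mulr_algl scalerA -expr2 mulrnAl mulrnAr -mulrnA -expr2 z2.
rewrite -!mulr_sumr (@block _ a b d x y f t); first by rewrite (mulrA c t) ct mul1r.
- by move=> u; rewrite /a mulrDl mulrDr mulr_algl mulr_algr mulrnAl mulrnAr zc.
- by move=> u; rewrite /b mulrBl mulrBr mulr_algl mulr_algr mulrnAl mulrnAr zc.
- exact: tC.
- by rewrite /a /b /t addrACA subrr addr0 mulr_natl -scalerMnl mulr2n.
- have Pd : d = horner_alg zeta ((1-r)%:P - 'X*+2).
    by rewrite /d rmorphB rmorphMn /= (horner_algC zeta) (horner_algX zeta).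
  have PG : (zeta - 1) * (zeta + (s ^+ 2)%:A) = horner_alg zeta (('X-1)*('X+r%:P)).
    rewrite rmorphM rmorphB rmorphD rmorph1 /= (horner_algX zeta).
by congr (_ * (_ + _)); symmetry; exact: horner_algC.
  rewrite /x /y (mulrN (xi *+ 2) (eta *+ 2)) mulrnAl mulrnAr -mulrnA r10 mulrnDl opprD addrA ab.
  congr (_ - _).
  have HP := congr1 (horner_alg zeta) (polyid r).
  rewrite rmorphB rmorphMn rmorphM in HP.
  rewrite Pd PG HP; exact: horner_algC.
- rewrite /x mulrnAl mulrnAr -mulrnDl.
  suff -> : d * xi + xi * f = 0 by rewrite mul0rn.
  rewrite /d /f mulrBl mulrDr mulr_algl mulr_algr !mulrnAl !mulrnAr r1.
  rewrite -scalerAr !mulr_algl -scalerAl addrACA addNr addr0 -scalerDl.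
  have -> : (1 - r) + (r - 1) = 0 by rewrite addrA subrK subrr.
  by rewrite scale0r.
- rewrite /y mulNr mulrN -opprD mulrnAl mulrnAr -mulrnDl.
  suff -> : eta * d + f * eta = 0 by rewrite mul0rn oppr0.
  rewrite /d /f mulrBr mulrDl mulr_algl mulr_algr !mulrnAl !mulrnAr r2.
  rewrite !mulr_algl addrACA addNr addr0 -scalerDl.
  have -> : (1 - r) + (r - 1) = 0 by rewrite addrA subrK subrr.
  by rewrite scale0r.
- have Pf : f = horner_alg zeta ((r-1)%:P + (w%:P * 'X)*+2).
    rewrite /f rmorphD rmorphMn rmorphM /= (horner_algX zeta).
    by congr (_ + (_ * _) *+ 2); symmetry; exact: horner_algC.
  have PG : ((q^+2)%:A * zeta - 1) * ((q^+2)%:A * zeta + (s ^+ 2)%:A)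
            = horner_alg zeta ((w%:P * 'X - 1)*(w%:P * 'X + r%:P)).
    rewrite rmorphM rmorphB rmorphD rmorph1 rmorphM /= (horner_algX zeta).
    by congr ((_ * _ - _) * (_ * _ + _)); symmetry; exact: horner_algC.
  rewrite /x /y mulNr mulrnAl mulrnAr -mulrnA r11 mulrnDl opprD addrC addrA ab.
  congr (_ - _).
  have HP := congr1 (horner_alg zeta) (polyid2 r w).
  rewrite rmorphB rmorphMn rmorphM in HP.
  rewrite Pf PG HP; exact: horner_algC.
Qed.

Lemma part2 (p q s : CC) (A : algType CC) (xi eta zeta U V Z : A) (star : A -> A) :
     q ^+ 2 \is Num.real -> s ^+ 2 \is Num.real ->
     is_involution star ->
     star zeta = zeta -> star xi = - eta -> star Z = Z ->
     mx_star star (e_tilde q s xi eta zeta Z) = e_tilde q s xi eta zeta Z.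
Proof.
move=> wR rR [sD sZ sM sK] sz sxi sZZ.
set r := s ^+ 2; set w := q ^+ 2; set k := 1 + r.
set c : A := ((2 * k)^-1)%:A.
set a : A := k%:A + Z *+ 2.
set b : A := k%:A - Z *+ 2.
set d : A := (1 - r)%:A - zeta *+ 2.
set f : A := (r - 1)%:A + (w%:A * zeta) *+ 2.
set x : A := xi *+ 2.
set y : A := - (eta *+ 2).
have Ee : forall i j, e_tilde q s xi eta zeta Z i j = c * Mf a b d x y f i j.
  by move=> i j; rewrite mxE.
have sR : forall (e : CC) u, e \is Num.real -> star (e *: u) = e *: star u.
  move=> e u eR; rewrite sZ; congr (_ *: _); by move: eR; rewrite CrealE => /eqP.
have s0 : star 0 = 0.
  by rewrite -[X in star X](scale0r (0:A)) sR ?rpred0 // scale0r.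
have sN : forall u, star (- u) = - star u.
  by move=> u; rewrite -scaleN1r sR ?rpredN ?rpred1 // scaleN1r.
have sB : forall u v, star (u - v) = star u - star v by move=> u v; rewrite sD sN.
have sMn : forall u n, star (u *+ n) = star u *+ n.
  by move=> u; elim=> [|n IH]; rewrite ?mulr0n ?s0 // !mulrS sD IH.
have s1 : star 1 = 1.
  have := sM (star 1) 1; rewrite mulr1 sK mulr1 => H; by rewrite -H.
have sA : forall e : CC, e \is Num.real -> star (e%:A) = e%:A.
  by move=> e eR; rewrite sR // s1.
have seta : star eta = - xi by rewrite -[eta]opprK -sxi sN sK.
have kR : k \is Num.real by rewrite rpredD ?rpred1.
have sa : star a = a by rewrite /a sD sA // sMn sZZ.
have sb : star b = b by rewrite /b sB sA // sMn sZZ.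
have sd : star d = d by rewrite /d sB sA ?rpredB ?rpred1 // sMn sz.
have sf : star f = f.
  by rewrite /f sD sA ?rpredB ?rpred1 // sMn sM sz sA // mulr_algl mulr_algr.
have sx : star x = y by rewrite /x sMn sxi mulNrn.
have sy : star y = x by rewrite /y sN sMn seta mulNrn opprK.
have cR : (2 * k)^-1 \is Num.real by rewrite rpredV rpredM ?realn.
apply/matrixP => i j.
rewrite mxE !Ee sM sA // mulr_algr mulr_algl; congr (_ *: _).
case: i => [[|[|[|[|i]]]] Hi] //=; case: j => [[|[|[|[|j]]]] Hj] //=;
  rewrite /Mf /= ?s0 ?sa ?sb ?sd ?sf ?sx ?sy //.
Qed.

Theorem mainTheorem3 (p q s : CC) (hp : p != 0) (hq : q != 0)
    (hs : s ^+ 2 != - 1)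
    (A : algType CC) (xi eta zeta U V Z : A)
    (hrel : tildeA_relations p q s xi eta zeta U V Z) :
  e_tilde q s xi eta zeta Z * e_tilde q s xi eta zeta Z
    = e_tilde q s xi eta zeta Z
  /\
  (forall star : A -> A,
     q ^+ 2 \is Num.real -> s ^+ 2 \is Num.real -> `|p| = 1 ->
     is_involution star ->
     star zeta = zeta -> star xi = - eta -> star U = V -> star Z = Z ->
     mx_star star (e_tilde q s xi eta zeta Z) = e_tilde q s xi eta zeta Z).
Proof.
split; first exact: (@part1 p q s hq hs A xi eta zeta U V Z hrel).
move=> star wR rR _ inv sz sxi _ sZ.
exact: (@part2 p q s A xi eta zeta U V Z star wR rR inv sz sxi sZ).
Qed.
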